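(* Let $n\ge1$ and let $A_1,\dots,A_n\subset\omega$ be co-infinite. Consider the equivalence relation on $\mathrm{Inj}(n\times\omega,\omega)$ generated by $\phi\sim\phi\circ(f_1\amalg\dots\amalg f_n)$ for all $\phi\in\mathrm{Inj}(n\times\omega,\omega)$ and $f_i\in\mathcal M_{A_i}$ ($i=1,\dots,n$). Then two elements of $\mathrm{Inj}(n\times\omega,\omega)$ are equivalent if and only if they agree on $\{i\}\times A_i\subset n\times\omega$ for all $i=1,\dots,n$.
   Context: $\omega=\{1,2,\dots\}$, $n=\{1,\dots,n\}$, $\mathcal M$ the monoid of injections $\omega\to\omega$, $\mathcal M_A$ the submonoid of injections fixing $A$ elementwise. $\mathrm{Inj}(n\times\omega,\omega)$ is the set of injections $n\times\omega\to\omega$, and $f_1\amalg\dots\amalg f_n$ is the self-map of $n\times\omega$ sending $(i,t)$ to $(i,f_i(t))$. A subset of $\omega$ is co-infinite if its complement is infinite. *)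

(* Defs.v *)
From mathcomp Require Import all_boot.
From Stdlib Require Import Relations.Relation_Operators.
Set Implicit Arguments. Unset Strict Implicit. Unset Printing Implicit Defensive.

Definition coinfinite (A : nat -> Prop) : Prop :=
  forall m : nat, exists k : nat, m <= k /\ ~ A k.

Definition in_MA (A : nat -> Prop) (f : nat -> nat) : Prop :=
  injective f /\ (forall a, A a -> f a = a).

Definition Inj (n : nat) := { phi : 'I_n * nat -> nat | injective phi }.

Definition coprod (n : nat) (f : 'I_n -> nat -> nat) (p : 'I_n * nat) : 'I_n * nat :=
  (p.1, f p.1 p.2).

Definition gen_step (n : nat) (A : 'I_n -> nat -> Prop) (phi psi : Inj n) : Prop :=
  exists f : 'I_n -> nat -> nat,
    (forall i, in_MA (A i) (f i)) /\
    (forall p, proj1_sig psi p = proj1_sig phi (coprod f p)).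

Definition inj_equiv (n : nat) (A : 'I_n -> nat -> Prop) : Inj n -> Inj n -> Prop :=
  clos_refl_sym_trans (Inj n) (gen_step A).

(* Main.v *)
Require Import Defs.
From mathcomp Require Import all_boot.
From Stdlib Require Import ClassicalEpsilon Relations.Relation_Operators.
Set Implicit Arguments. Unset Strict Implicit. Unset Printing Implicit Defensive.

Definition dec (P : Prop) : bool := if excluded_middle_informative P then true else false.
Lemma decP (P : Prop) : reflect P (dec P).
Proof. by rewrite /dec; case: excluded_middle_informative => h; constructor. Qed.

Lemma big_of_inj (g : nat -> nat) : injective g -> forall T, exists k, T < g k.
Proof.
move=> gi T; case: (classic (exists k, T < g k)) => // H; exfalso.
have Hle : forall k, g k < T.+1.
  by move=> k; rewrite ltnS leqNgt; apply/negP => hk; apply: H; exists k.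
pose h (i : 'I_(T.+2)) : 'I_(T.+1) := Ordinal (Hle i).
have hi : injective h by move=> i j /(congr1 val) /= /gi /val_inj.
by have := @leq_card _ _ h hi; rewrite !card_ord ltnn.
Qed.

Lemma strict_inj (e : nat -> nat) : (forall k, e k < e k.+1) -> injective e.
Proof.
move=> he.
have hm : forall k d, e k < e (k + d).+1.
  move=> k; elim=> [|d IH]; first by rewrite addn0.
  by apply: ltn_trans (he _); rewrite addnS.
move=> x y exy; case: (ltngtP x y) => // h.
  by have := hm x (y - x.+1); rewrite -addSn subnKC // exy ltnn.
by have := hm y (x - y.+1); rewrite -addSn subnKC // exy ltnn.
Qed.

Section Enum.
Variables (A : nat -> Prop) (hA : coinfinite A).
Definition nb m := proj1_sig (constructive_indefinite_description _ (hA m)).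
Lemma nb_spec m : m <= nb m /\ ~ A (nb m).
Proof. rewrite /nb; case: (constructive_indefinite_description _ (hA m)) => x hx /=; exact: hx. Qed.
Fixpoint enum k := match k with 0 => nb 0 | k'.+1 => nb (enum k').+1 end.
Lemma enum_notA k : ~ A (enum k).
Proof. by case: k => [|k] /=; [case: (nb_spec 0) | case: (nb_spec (enum k).+1)]. Qed.
Lemma enum_inj : injective enum.
Proof. by apply: strict_inj => k /=; case: (nb_spec (enum k).+1). Qed.
Lemma exists_big (f : nat -> nat) : injective f -> forall T, exists b, ~ A b /\ T < f b.
Proof.
move=> fi T; have [k hk] := big_of_inj (fun x y h => enum_inj (fi _ _ h)) T.
by exists (enum k); split => //; exact: enum_notA.
Qed.
End Enum.

Section Main.
Variables (n : nat) (A : 'I_n -> nat -> Prop) (hA : forall i, coinfinite (A i)).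
Variables (phi psi : Inj n) (hn : 0 < n).
Hypothesis agree : forall (i : 'I_n) (a : nat), A i a -> sval phi (i, a) = sval psi (i, a).

Lemma sec_inj (h : 'I_n * nat -> nat) (i : 'I_n) : injective h -> injective (fun x => h (i, x)).
Proof. by move=> hi x y /hi [->]. Qed.

Definition Ms i T := proj1_sig (constructive_indefinite_description _
  (exists_big (hA i) (sec_inj (i:=i) (proj2_sig phi)) T)).
Definition Mt i T := proj1_sig (constructive_indefinite_description _
  (exists_big (hA i) (sec_inj (i:=i) (proj2_sig psi)) T)).
Lemma Ms_spec i T : ~ A i (Ms i T) /\ T < sval phi (i, Ms i T).
Proof. by rewrite /Ms; case: (constructive_indefinite_description _ _). Qed.
Lemma Mt_spec i T : ~ A i (Mt i T) /\ T < sval psi (i, Mt i T).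
Proof. by rewrite /Mt; case: (constructive_indefinite_description _ _). Qed.

Definition pick i m T := if odd m then sval psi (i, Mt i T) else sval phi (i, Ms i T).
Fixpoint c m := match m with 0 => 0 | m'.+1 => \max_(i < n) pick i m' (c m') end.

Lemma pick_gt i m T : T < pick i m T.
Proof. by rewrite /pick; case: odd; [case: (Mt_spec i T) | case: (Ms_spec i T)]. Qed.
Lemma pick_le i m : pick i m (c m) <= c m.+1.
Proof. by rewrite /=; apply: (@leq_bigmax _ (fun j => pick j m (c m)) i). Qed.
Lemma c_lt m : c m < c m.+1.
Proof. exact: leq_trans (pick_gt (Ordinal hn) m (c m)) (pick_le _ _). Qed.
Lemma c_mono m d : c m.+1 <= c (m.+1 + d).
Proof. elim: d => [|d IH]; first by rewrite addn0. by rewrite addnS; apply: leq_trans IH (ltnW (c_lt _)). Qed.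
Lemma stage_eq i j m m' : pick i m (c m) = pick j m' (c m') -> m = m'.
Proof.
have key : forall i j m m', m < m' -> pick i m (c m) < pick j m' (c m').
  move=> i0 j0 x y lt; apply: leq_ltn_trans (pick_le i0 x) _.
  apply: leq_trans (pick_gt j0 y (c y)).
  by have := c_mono x (y - x.+1); rewrite subnKC.
move=> h; case: (ltngtP m m') => // lt.
  by have := key i j _ _ lt; rewrite h ltnn.
by have := key j i _ _ lt; rewrite h ltnn.
Qed.

Definition e i := enum (hA i).

Definition kindS i x : option nat :=
  match excluded_middle_informative (exists k, x = e i k.*2) with
  | left h => Some (proj1_sig (constructive_indefinite_description _ h))
  | right _ => None end.

Lemma kindS_some i x k : kindS i x = Some k -> x = e i k.*2.
Proof.
rewrite /kindS; case: excluded_middle_informative => // h.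
by case: (constructive_indefinite_description _ h) => k' hk' /= [<-].
Qed.
Lemma kindS_even i k : kindS i (e i k.*2) = Some k.
Proof.
rewrite /kindS; case: excluded_middle_informative => [h|h]; last by exfalso; apply: h; exists k.
case: (constructive_indefinite_description _ h) => k' /= /enum_inj hk'.
by congr Some; apply: double_inj.
Qed.
Lemma kindS_odd i k : kindS i (e i k.*2.+1) = None.
Proof.
rewrite /kindS; case: excluded_middle_informative => // h; exfalso.
case: h => k' /enum_inj /(congr1 odd); by rewrite /= !odd_double.
Qed.

Definition chi (p : 'I_n * nat) : nat :=
  if dec (A p.1 p.2) then sval phi p else
  match kindS p.1 p.2 with
  | Some k => pick p.1 k.*2 (c k.*2)
  | None => pick p.1 p.2.*2.+1 (c p.2.*2.+1) end.

Lemma chi_inj : injective chi.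
Proof.
have phiI := proj2_sig phi; have psiI := proj2_sig psi.
have pe : forall i k, pick i k.*2 (c k.*2) = sval phi (i, Ms i (c k.*2)).
  by move=> i k; rewrite /pick odd_double.
have po : forall i k, pick i k.*2.+1 (c k.*2.+1) = sval psi (i, Mt i (c k.*2.+1)).
  by move=> i k; rewrite /pick /= odd_double.
move=> [i x] [j y]; rewrite /chi /=.
case: decP => ax; case: decP => ay.
- by move/phiI.
- case E: kindS => [k|].
    rewrite pe => /phiI [ij hx]; subst j; by case: (Ms_spec i (c k.*2)); rewrite -hx.
  rewrite po agree // => /psiI [ij hx]; subst j; by case: (Mt_spec i (c y.*2.+1)); rewrite -hx.
- case E: kindS => [k|].
    rewrite pe => /esym/phiI [ij hx]; subst j; by case: (Ms_spec i (c k.*2)); rewrite -hx.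
  rewrite po agree // => /esym/psiI [ij hx]; subst j; by case: (Mt_spec i (c x.*2.+1)); rewrite -hx.
- case Ex: (kindS i x) => [k|]; case Ey: (kindS j y) => [l|].
  + move=> h; have st := stage_eq h; have kl : k = l by apply: double_inj.
    subst l; move: h; rewrite !pe => /phiI [ij _]; subst j.
    by rewrite (kindS_some Ex) (kindS_some Ey).
  + by move/stage_eq/(congr1 odd); rewrite /= !odd_double.
  + by move/stage_eq/(congr1 odd); rewrite /= !odd_double.
  + move=> h; have st := stage_eq h; have xy : x = y by apply: double_inj; case: st.
    subst y; move: h; rewrite !po => /psiI [ij _]; by subst j.
Qed.

Definition F i x := if dec (A i x) then x else Ms i (c x.*2).
Definition G i x := if dec (A i x) then x else e i x.*2.
Definition H i x := if dec (A i x) then x else e i x.*2.+1.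
Definition F' i x := if dec (A i x) then x else Mt i (c (e i x.*2.+1).*2.+1).

Lemma MA_gen (i : 'I_n) (h : nat -> nat) : (forall x, ~ A i (h x)) -> injective h ->
  in_MA (A i) (fun x => if dec (A i x) then x else h x).
Proof.
move=> hn' hi; split; last by move=> a ha; case: decP.
move=> x y; case: decP => ax; case: decP => ay //.
- by move=> E; case: (hn' y); rewrite -E.
- by move=> E; case: (hn' x); rewrite E.
- exact: hi.
Qed.

Lemma MA_F i : in_MA (A i) (F i).
Proof.
apply: MA_gen; first by move=> x; case: (Ms_spec i (c x.*2)).
move=> x y E; have : pick i x.*2 (c x.*2) = pick i y.*2 (c y.*2) by rewrite /pick !odd_double E.
by move/stage_eq/double_inj.
Qed.
Lemma MA_G i : in_MA (A i) (G i).
Proof. apply: MA_gen; first by move=> x; apply: enum_notA. by move=> x y /enum_inj/double_inj. Qed.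
Lemma MA_H i : in_MA (A i) (H i).
Proof. apply: MA_gen; first by move=> x; apply: enum_notA. by move=> x y /enum_inj /eqP; rewrite eqSS => /eqP /double_inj. Qed.
Lemma MA_F' i : in_MA (A i) (F' i).
Proof.
apply: MA_gen; first by move=> x; case: (Mt_spec i (c (e i x.*2.+1).*2.+1)).
move=> x y E.
have : pick i (e i x.*2.+1).*2.+1 (c (e i x.*2.+1).*2.+1) = pick i (e i y.*2.+1).*2.+1 (c (e i y.*2.+1).*2.+1)
  by rewrite /pick /= !odd_double /= E.
by move/stage_eq/eqP; rewrite eqSS => /eqP /double_inj /enum_inj /eqP; rewrite eqSS => /eqP /double_inj.
Qed.


Lemma coprod_inj (f : 'I_n -> nat -> nat) : (forall i, in_MA (A i) (f i)) -> injective (coprod f).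
Proof. move=> hf [i x] [j y] [ij]; subst j => /(proj1 (hf i)) ->; done. Qed.

Lemma eqG p : sval phi (coprod F p) = chi (coprod G p).
Proof.
case: p => i x; rewrite /coprod /chi /F /G /=.
case: decP => ax; first by case: decP.
case: decP => [h|_]; first by case: (@enum_notA _ (hA i) x.*2).
by rewrite kindS_even /pick odd_double.
Qed.
Lemma eqH p : sval psi (coprod F' p) = chi (coprod H p).
Proof.
case: p => i x; rewrite /coprod /chi /F' /H /=.
case: decP => ax; first by case: decP => // _; rewrite agree.
case: decP => [h|_]; first by case: (@enum_notA _ (hA i) x.*2.+1).
by rewrite kindS_odd /pick /= odd_double.
Qed.

Lemma back : inj_equiv A phi psi.
Proof.
have sinj : injective (fun p => sval phi (coprod F p)).
  by move=> p q /(proj2_sig phi) /(coprod_inj MA_F).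
have tinj : injective (fun p => sval psi (coprod F' p)).
  by move=> p q /(proj2_sig psi) /(coprod_inj MA_F').
pose sI : Inj n := exist _ _ sinj.
pose tI : Inj n := exist _ _ tinj.
pose cI : Inj n := exist _ _ chi_inj.
apply: (rst_trans _ _ _ sI); first by apply: rst_step; exists F; split => //; exact: MA_F.
apply: (rst_trans _ _ _ cI).
  by apply: rst_sym; apply: rst_step; exists G; split; [exact: MA_G | exact: eqG].
apply: (rst_trans _ _ _ tI).
  by apply: rst_step; exists H; split; [exact: MA_H | move=> p; rewrite /= -eqH].
by apply: rst_sym; apply: rst_step; exists F'; split => //; exact: MA_F'.
Qed.

End Main.

Lemma forth (n : nat) (A : 'I_n -> nat -> Prop) (phi psi : Inj n) :
  inj_equiv A phi psi ->
  forall (i : 'I_n) (a : nat), A i a -> sval phi (i, a) = sval psi (i, a).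
Proof.
elim=> {phi psi} [x y [f [hf he]]|x|x y _ IH|x y z _ IH1 _ IH2] i a ha //.
- by rewrite he /coprod /= (proj2 (hf i)).
- by rewrite IH.
- by rewrite IH1 // IH2.
Qed.

Theorem lemma2p27 (n : nat) (A : 'I_n -> nat -> Prop) :
  1 <= n ->
  (forall i, coinfinite (A i)) ->
  forall phi psi : Inj n,
    inj_equiv A phi psi <->
    (forall (i : 'I_n) (a : nat), A i a -> proj1_sig phi (i, a) = proj1_sig psi (i, a)).
Proof.
move=> hn hA phi psi; split; first exact: forth.
by move=> ag; apply: back.
Qed.
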